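(* Let $L/K$ be a quadratic extension of local fields and let $\lambda\subseteq\mathbb A=\mathbb M_2(K)$ be a subalgebra isomorphic to $L$, with ring of integers $\mathcal O_\lambda$ and a uniformizer $\boldsymbol\pi_\lambda$ of $\mathcal O_\lambda$. Let $\mathcal B$ be a full order of $\mathbb A$ containing $\mathcal O_\lambda$. Then every full order $\mathcal B'\subseteq\mathcal B$ with $\mathcal O_\lambda\subseteq\mathcal B'$ has the form $\mathcal B'=\mathcal O_\lambda+\boldsymbol\pi_\lambda^r\mathcal B$ for some integer $r\ge0$.
   Context: $K$ is a non-archimedean local field with ring of integers $\mathcal O_K$. An order of $\mathbb A$ is a subring containing the identity which is a finitely generated $\mathcal O_K$-submodule; full if it spans $\mathbb A$ over $K$. A uniformizer of $\mathcal O_\lambda$ is a generator of its maximal ideal. *)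

(* Defs.v *)
From HB Require Import structures.
From mathcomp Require Import all_boot all_order all_algebra.
Set Implicit Arguments. Unset Strict Implicit. Unset Printing Implicit Defensive.
Import Order.TTheory GRing.Theory Num.Theory.
Local Open Scope ring_scope.

(** * Non-archimedean local fields, presented through a normalized discrete
    valuation [v : K -> int] (the value [v 0] is irrelevant: all axioms only
    look at nonzero elements; conventionally v 0 = +oo). *)

Definition discrete_valuation (K : fieldType) (v : K -> int) : Prop :=
  [/\ (forall x y : K, x != 0 -> y != 0 -> v (x * y) = v x + v y),
      (forall x y : K, x != 0 -> y != 0 -> x + y != 0 ->
           Num.min (v x) (v y) <= v (x + y)) &
      (exists x : K, x != 0 /\ v x = 1)].

Definition vclose (K : fieldType) (v : K -> int) (n : int) (x y : K) : Prop :=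
  x - y = 0 \/ n <= v (x - y).

Definition vcauchy (K : fieldType) (v : K -> int) (u : nat -> K) : Prop :=
  forall n : int, exists N : nat, forall m k : nat,
    (N <= m)%N -> (N <= k)%N -> vclose v n (u m) (u k).

Definition vconverges (K : fieldType) (v : K -> int) (u : nat -> K) (l : K) : Prop :=
  forall n : int, exists N : nat, forall m : nat, (N <= m)%N -> vclose v n (u m) l.

Definition vcomplete (K : fieldType) (v : K -> int) : Prop :=
  forall u : nat -> K, vcauchy v u -> exists l, vconverges v u l.

Definition ring_of_integers (K : fieldType) (v : K -> int) (x : K) : Prop :=
  x = 0 \/ 0 <= v x.

(** Finite residue field: finitely many classes of O_K modulo the maximal
    ideal {x | v x >= 1}. *)
Definition finite_residue_field (K : fieldType) (v : K -> int) : Prop :=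
  exists s : seq K, (forall y, y \in s -> ring_of_integers v y) /\
    forall x, ring_of_integers v x -> exists2 y, y \in s & vclose v 1 x y.

Definition nonarch_local_field (K : fieldType) (v : K -> int) : Prop :=
  [/\ discrete_valuation v, vcomplete v & finite_residue_field v].

Notation mxset K := ('M[K]_2 -> Prop).

(** [lam] is a K-subalgebra of M_2(K) which is a field of K-dimension 2,
    i.e. a subalgebra isomorphic to a quadratic extension L of K. *)
Definition quadratic_subfield (K : fieldType) (lam : mxset K) : Prop :=
  lam 1%:M /\
  [/\ (forall x y, lam x -> lam y -> lam (x + y)),
      (forall x y, lam x -> lam y -> lam (x * y)),
      (forall (a : K) x, lam x -> lam (a *: x)),
      (forall x, lam x -> x != 0 -> x \in unitmx /\ lam (invmx x)) &
      (exists e1 e2, [/\ lam e1, lam e2,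
          (forall a b : K, a *: e1 + b *: e2 = 0 -> a = 0 /\ b = 0) &
          (forall x, lam x -> exists a b : K, x = a *: e1 + b *: e2)])].

(** Ring of integers of lam: the elements of lam integral over O_K. *)
Definition int_closure (K : fieldType) (v : K -> int) (lam : mxset K) : mxset K :=
  fun x => lam x /\ exists p : {poly K},
    [/\ p \is monic, (forall i, ring_of_integers v p`_i) & horner_mx x p = 0].

Definition is_ideal (K : fieldType) (R I : mxset K) : Prop :=
  [/\ (forall x, I x -> R x), I 0,
      (forall x y, I x -> I y -> I (x - y)) &
      (forall x y, I x -> R y -> I (y * x) /\ I (x * y))].

Definition is_maximal_ideal (K : fieldType) (R I : mxset K) : Prop :=
  is_ideal R I /\ ~ I 1%:M /\
  forall J, is_ideal R J -> (forall x, I x -> J x) ->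
    (forall x, J x <-> I x) \/ J 1%:M.

Definition uniformizer (K : fieldType) (R : mxset K) (pi : 'M[K]_2) : Prop :=
  R pi /\ is_maximal_ideal R (fun x => exists2 y, R y & x = pi * y).

Definition is_order (K : fieldType) (v : K -> int) (B : mxset K) : Prop :=
  [/\ B 1%:M,
      (forall x y, B x -> B y -> B (x + y) /\ B (x * y) /\ B (- x)),
      (forall a x, ring_of_integers v a -> B x -> B (a *: x)) &
      (exists s : seq 'M[K]_2, (forall g, g \in s -> B g) /\
         forall x, B x -> exists c : nat -> K,
           (forall i, ring_of_integers v (c i)) /\
           x = \sum_(i < size s) c i *: s`_i)].

Definition is_full_order (K : fieldType) (v : K -> int) (B : mxset K) : Prop :=
  is_order v B /\
  forall x : 'M[K]_2, exists s : seq 'M[K]_2, (forall g, g \in s -> B g) /\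
    exists c : nat -> K, x = \sum_(i < size s) c i *: s`_i.

(* Main.v *)
Require Import Defs.
From HB Require Import structures.
From mathcomp Require Import all_boot all_order all_algebra.
From mathcomp Require Import ring zify.
From Stdlib Require Import Classical.
Import Order.TTheory GRing.Theory Num.Theory.
Local Open Scope ring_scope.
Set Implicit Arguments. Unset Strict Implicit.

Section Val.
Variables (K : fieldType) (v : K -> int).
Hypothesis hv : discrete_valuation v.

Definition ge (n : int) (x : K) := x = 0 \/ n <= v x.

Lemma vmul {x y : K} : x != 0 -> y != 0 -> v (x * y) = v x + v y.
Proof. by case: hv => H _ _; apply: H. Qed.

Lemma vultra {x y : K} : x != 0 -> y != 0 -> x + y != 0 -> Num.min (v x) (v y) <= v (x + y).
Proof. by case: hv => _ H _; apply: H. Qed.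

Lemma v1 : v 1 = 0.
Proof.
have := @vmul 1 1 (oner_neq0 K) (oner_neq0 K); rewrite mulr1; lia.
Qed.

Lemma vN1 : v (-1) = 0.
Proof.
have h : (-1 : K) != 0 by rewrite oppr_eq0 oner_neq0.
have := vmul h h; rewrite mulrNN mulr1 v1; lia.
Qed.

Lemma vN x : v (- x) = v x.
Proof.
have [->|x0] := eqVneq x 0; first by rewrite oppr0.
have h : (-1 : K) != 0 by rewrite oppr_eq0 oner_neq0.
by rewrite -mulN1r vmul // vN1 add0r.
Qed.

Lemma vinv x : x != 0 -> v (x^-1) = - v x.
Proof.
move=> x0; have := vmul x0 (invr_neq0 x0); rewrite mulfV // v1; lia.
Qed.

Lemma vexp x n : x != 0 -> v (x ^+ n) = v x *+ n.
Proof.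
move=> x0; elim: n => [|n IH]; first by rewrite expr0 v1.
by rewrite exprS vmul ?expf_neq0 // IH mulrS.
Qed.

Lemma ge0x n : ge n 0. Proof. by left. Qed.

Lemma ge_v x : ge (v x) x. Proof. by right. Qed.

Lemma ge_le {m n x} : m <= n -> ge n x -> ge m x.
Proof. by move=> mn [->|h]; [left|right; exact: le_trans mn h]. Qed.

Lemma ge_add {n x y} : ge n x -> ge n y -> ge n (x + y).
Proof.
move=> [->|hx]; first by rewrite add0r.
move=> [->|hy]; first by rewrite addr0; right.
have [->|xy0] := eqVneq (x + y) 0; first by left.
have [->|x0] := eqVneq x 0; first by rewrite add0r; right.
have [->|y0] := eqVneq y 0; first by rewrite addr0; right.
right; have := vultra x0 y0 xy0; have := hx; have := hy; lia.
Qed.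

Lemma ge_opp {n x} : ge n x -> ge n (- x).
Proof. by move=> [->|h]; [left; rewrite oppr0|right; rewrite vN]. Qed.

Lemma ge_sub {n x y} : ge n x -> ge n y -> ge n (x - y).
Proof. by move=> hx hy; apply: ge_add => //; apply: ge_opp. Qed.

Lemma ge_mul {m n x y} : ge m x -> ge n y -> ge (m + n) (x * y).
Proof.
move=> [->|hx]; first by rewrite mul0r; left.
move=> [->|hy]; first by rewrite mulr0; left.
have [->|x0] := eqVneq x 0; first by rewrite mul0r; left.
have [->|y0] := eqVneq y 0; first by rewrite mulr0; left.
by right; rewrite vmul // lerD.
Qed.

Lemma ge_all x : (forall n, ge n x) -> x = 0.
Proof.
move=> h; case: (h (v x + 1)) => // hx.
by exfalso; move: hx; lia.
Qed.

Lemma ge_strict {a y : K} : a != 0 -> ge (v a + 1) y -> a - y != 0 /\ v (a - y) = v a.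
Proof.
move=> a0 hy.
have hay : ge (v a) (a - y).
  by apply: ge_sub; [apply: ge_v | apply: ge_le hy; rewrite lerDl].
have ay0 : a - y != 0.
  apply/eqP => e; move/eqP: e; rewrite subr_eq0 => /eqP e; subst y.
  by case: hy => [/eqP|]; [rewrite (negPf a0)|lia].
split => //; case: hay => [/eqP|h]; first by rewrite (negPf ay0).
case: (boolP (v a + 1 <= v (a - y))) => lt; last by lia.
have : ge (v a + 1) ((a - y) + y) by apply: ge_add => //; right.
rewrite subrK => -[/eqP|]; first by rewrite (negPf a0).
lia.
Qed.


Lemma subrKA' (x y z : K) : (x - z) - (x - y) = y - z.
Proof. by rewrite opprB addrC addrA subrK. Qed.

Lemma subrB2 (x y c : K) : (x - c) - (y - c) = x - y.
Proof. by rewrite opprB addrA subrK. Qed.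

Fixpoint hs (a b : K) (n : nat) : K :=
  match n with 0 => 0 | S k => b / (a - hs a b k) end.

Lemma hensel (hc : vcomplete v) a b : a != 0 -> v a < 0 -> ge 0 b ->
  exists y, y * (a - y) = b.
Proof.
move=> a0 va0 gb.
have inv0 : forall n, ge 0 (hs a b n).
  elim=> [|n IH]; first by left.
  have hle : v a + 1 <= 0 by lia.
  have [h1 h2] := ge_strict a0 (ge_le hle IH).
  apply: (@ge_le 0 (0 + - v a)); first by lia.
  apply: ge_mul gb _; rewrite -h2 -vinv //; exact: ge_v.
have hle : v a + 1 <= 0 by lia.
have aY : forall n, a - hs a b n != 0 /\ v (a - hs a b n) = v a.
  by move=> n; apply: ge_strict a0 (ge_le hle (inv0 n)).
have Dn : forall n : nat, ge n%:Z (hs a b n.+1 - hs a b n).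
  elim=> [|n IH]; first by rewrite subr0; apply: inv0.
  have [h1 h2] := aY n; have [h3 h4] := aY n.+1.
  have -> : hs a b n.+2 - hs a b n.+1 =
     b * (hs a b n.+1 - hs a b n) * ((a - hs a b n.+1) * (a - hs a b n))^-1.
    have gen : forall c d : K, c != 0 -> d != 0 ->
        b / c - b / d = b * (d - c) * (c * d)^-1.
      by move=> c d c0 d0; field; rewrite c0 d0.
    rewrite [hs a b n.+2]/= [X in _ - X]/= gen //; congr (b * _ * _).
    by rewrite subrKA'.
  have hw : ge (- (v a + v a)) (((a - hs a b n.+1) * (a - hs a b n))^-1).
    by rewrite -{1}h4 -h2 -vmul // -vinv ?mulf_neq0 //; apply: ge_v.
  apply: (@ge_le _ (0 + n%:Z + - (v a + v a))); first by lia.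
  by apply: ge_mul hw; apply: ge_mul IH.
have Cn : forall (N j : nat), ge N%:Z (hs a b (N + j) - hs a b N).
  move=> N; elim=> [|j IH]; first by rewrite addn0 subrr; left.
  rewrite addnS.
  have -> : hs a b (N + j).+1 - hs a b N =
    (hs a b (N + j).+1 - hs a b (N + j)) + (hs a b (N + j) - hs a b N).
    by rewrite addrA subrK.
  apply: ge_add IH; apply: ge_le (Dn (N + j)); lia.
have [y hy] : exists y, vconverges v (hs a b) y.
  apply: hc => n; exists (absz n) => m k hm hk.
  rewrite -(subnKC hm) -(subnKC hk).
  change (ge n (hs a b (`|n| + (m - `|n|)) - hs a b (`|n| + (k - `|n|))))%N.
  rewrite -(subrB2 _ _ (hs a b `|n|)).
  apply: (@ge_le _ (`|n|%N%:Z)); first by lia.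
  by apply: ge_sub; apply: Cn.
exists y; apply/eqP; rewrite -subr_eq0; apply/eqP; apply: ge_all => n.
pose n' : int := (absz n + absz (v a))%N%:Z.
have [N hN] := hy n'.
have e1 : ge n' (hs a b N - y) := hN N (leqnn N).
have e2 : ge n' (hs a b N.+1 - y) := hN N.+1 (leqW (leqnn N)).
have [h1 _] := aY N.
have hb : b = hs a b N.+1 * (a - hs a b N) by rewrite /= mulfVK.
have gy : ge 0 y.
  rewrite -[y](subKr (hs a b N)); apply: ge_sub; first exact: inv0.
  by apply: ge_le e1; lia.
rewrite hb.
have -> : y * (a - y) - hs a b N.+1 * (a - hs a b N) =
   (y - hs a b N.+1) * (a - y) + hs a b N.+1 * (hs a b N - y) by ring.
apply: (@ge_le _ (n' + v a)); first by lia.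
apply: ge_add.
  rewrite -opprB mulNr; apply: ge_opp.
  have gay : ge (v a) (a - y) by apply: ge_sub; [apply: ge_v | apply: ge_le gy; lia].
  exact: (ge_mul e2 gay).
apply: (@ge_le _ (0 + n')); first by lia.
by apply: ge_mul e1; apply: inv0.
Qed.
End Val.

Unset Implicit Arguments. Set Strict Implicit.

Lemma det2 (K : comNzRingType) (A : 'M[K]_2) : \det A = A 0 0 * A 1 1 - A 0 1 * A 1 0.
Proof.
rewrite (expand_det_row _ 0) !big_ord_recl big_ord0 /cofactor !det_mx11 !mxE /=.
have E1 : (lift ord0 ord0 : 'I_2) = 1 by apply/val_inj.
have E3 : (lift (lift ord0 ord0) ord0 : 'I_2) = 0 by apply/val_inj.
have E4 : (lift (0:'I_2) ord0 : 'I_2) = 1 by apply/val_inj.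
rewrite E3 E4 ?E1 /bump /= expr0 expr1 mul1r mulN1r addr0 mulrN.
by [].
Qed.
Lemma tr2 (K : comNzRingType) (A : 'M[K]_2) : \tr A = A 0 0 + A 1 1.
Proof. rewrite /mxtrace !big_ord_recl big_ord0 addr0.
have E1 : (lift ord0 ord0 : 'I_2) = 1 by apply/val_inj.
by rewrite E1.
Qed.
Lemma det1D (K : comNzRingType) (A : 'M[K]_2) : \det (1 + A) = 1 + \tr A + \det A.
Proof. rewrite !det2 tr2 !mxE /=. ring. Qed.
Lemma horner_mx_sum (K : comNzRingType) (A : 'M[K]_2) p :
  horner_mx A p = \sum_(i < size p) p`_i *: A ^+ i.
Proof.
rewrite -{1}(coefK p) poly_def linear_sum; apply eq_bigr => i _.
by rewrite linearZ /= rmorphXn /= horner_mx_X.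
Qed.
Lemma CH2 (K : comNzRingType) (A : 'M[K]_2) :
  A * A - \tr A *: A + (\det A)%:M = 0.
Proof.
have := Cayley_Hamilton A. rewrite horner_mx_sum size_char_poly.
rewrite !big_ord_recl big_ord0 /=.
have := char_poly_monic A; rewrite monicE /lead_coef size_char_poly /= => /eqP ->.
rewrite (char_poly_trace A) // char_poly_det /bump /= expr0 expr1 expr2 => <-.
rewrite mulrNN mul1r scale1r addr0 scaleNr (_ : (1 + (1 + 0))%N = 2) // expr2 -scalemx1.
by rewrite mul1r [RHS]addrC [A * A - _]addrC.
Qed.

Lemma ord4 (P : 'I_4 -> Prop) : P ord0 -> P (lift ord0 ord0) ->
  P (lift ord0 (lift ord0 ord0)) -> P (lift ord0 (lift ord0 (lift ord0 ord0))) -> forall i, P i.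
Proof.
move=> h0 h1 h2 h3 [[|[|[|[|j]]]] hi] //.
- by rewrite (_ : Ordinal hi = ord0) //; apply/val_inj.
- by rewrite (_ : Ordinal hi = lift ord0 ord0) //; apply/val_inj.
- by rewrite (_ : Ordinal hi = lift ord0 (lift ord0 ord0)) //; apply/val_inj.
- by rewrite (_ : Ordinal hi = lift ord0 (lift ord0 (lift ord0 ord0))) //; apply/val_inj.
Qed.

Section Lam.
Variables (K : fieldType) (v : K -> int) (lam : 'M[K]_2 -> Prop).
Hypotheses (hv : discrete_valuation v) (hc : vcomplete v) (hq : quadratic_subfield lam).

Lemma lam1 : lam 1. Proof. by case: hq. Qed.
Lemma lamD {x y} : lam x -> lam y -> lam (x + y). Proof. by case: hq => _ [h _ _ _ _]; apply: h. Qed.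
Lemma lamM {x y} : lam x -> lam y -> lam (x * y). Proof. by case: hq => _ [_ h _ _ _]; apply: h. Qed.
Lemma lamZ a {x} : lam x -> lam (a *: x). Proof. by case: hq => _ [_ _ h _ _]; apply: h. Qed.
Lemma lamU {x} : lam x -> x != 0 -> x \in unitmx. Proof. by case: hq => _ [_ _ _ h _] lx x0; case: (h x lx x0). Qed.
Lemma lam0 : lam 0. Proof. by rewrite -(scale0r 1); apply: lamZ; apply: lam1. Qed.
Lemma lamV {x} : lam x -> lam (x^-1).
Proof.
move=> lx; have [->|x0] := eqVneq x 0; first by rewrite invr0; apply: lam0.
by case: hq => _ [_ _ _ h _]; case: (h x lx x0).
Qed.
Lemma lamN {x} : lam x -> lam (- x). Proof. by move=> h; rewrite -scaleN1r; apply: lamZ. Qed.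
Lemma lamB {x y} : lam x -> lam y -> lam (x - y). Proof. by move=> hx hy; apply: lamD => //; apply: lamN. Qed.
Lemma lamC c : lam c%:M. Proof. by rewrite -scalemx1; apply: lamZ; apply: lam1. Qed.
Lemma lamX {x} n : lam x -> lam (x ^+ n).
Proof. by move=> h; elim: n => [|n IH]; [rewrite expr0; apply: lam1 | rewrite exprS; apply: lamM]. Qed.

Lemma lam_gen : exists g, forall x, lam x -> exists c d : K, x = c%:M + d *: g.
Proof.
case: hq => _ [_ _ _ _ [e1 [e2 [l1 l2 ind sp]]]].
have [al [be h1]] := sp 1 lam1.
have [b0|b0] := eqVneq be 0.
  have a0 : al != 0.
    apply/eqP => a0; move: h1; rewrite b0 a0 !scale0r addr0 => /eqP.
    by rewrite oner_eq0.
  exists e2 => x /sp [a [b ->]].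
  exists (a / al), b; rewrite -scalemx1 (_ : 1%:M = 1) // h1 b0 scale0r addr0 scalerA mulfVK //.
have hmx : forall (a b a' b' : K), a = a' -> b = b' -> a *: e1 + b *: e2 = a' *: e1 + b' *: e2.
  by move=> ? ? ? ? -> ->.
exists e1 => x /sp [a [b ->]].
exists (b / be), (a - b / be * al).
rewrite -scalemx1 (_ : 1%:M = 1) // h1 scalerDr !scalerA addrAC -scalerDl.
by apply: hmx; [ring | field].
Qed.

Lemma lam_comm {x y} : lam x -> lam y -> x * y = y * x.
Proof.
have [g hg] := lam_gen.
move=> /hg [c [d ->]] /hg [c' [d' ->]].
have e : forall a b : K, a%:M + b *: g = horner_mx g (a%:P + b *: 'X).
  by move=> a b; rewrite rmorphD /= linearZ /= horner_mx_C horner_mx_X.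
by rewrite !e; apply: comm_horner_mx2.
Qed.


Definition w (x : 'M[K]_2) := v (\det x).
Definition wge n (x : 'M[K]_2) := x = 0 \/ n <= w x.

Lemma detnz {x} : lam x -> x != 0 -> \det x != 0.
Proof. by move=> lx x0; have := lamU lx x0; rewrite unitmxE unitfE. Qed.

Lemma mulnz {x y} : lam x -> lam y -> x != 0 -> y != 0 -> x * y != 0.
Proof.
move=> lx ly x0 y0; apply/eqP => e.
have := detM x y; rewrite e det0 => /esym/eqP.
by rewrite mulf_eq0 (negPf (detnz lx x0)) (negPf (detnz ly y0)).
Qed.

Lemma wM {x y} : lam x -> lam y -> x != 0 -> y != 0 -> w (x * y) = w x + w y.
Proof. by move=> lx ly x0 y0; rewrite /w detM (vmul hv) // detnz. Qed.

Lemma w1 : w 1 = 0.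
Proof. by rewrite /w (_ : \det (1 : 'M[K]_2) = 1) ?(v1 hv) //; exact: det1. Qed.

Lemma wN x : w (- x) = w x.
Proof. by rewrite /w -scaleN1r detZ sqrrN expr1n mul1r. Qed.

Lemma wC c : c != 0 -> w c%:M = v c + v c.
Proof. by move=> c0; rewrite /w det_scalar expr2 (vmul hv). Qed.

Lemma wV {x} : lam x -> x != 0 -> w x^-1 = - w x.
Proof. by move=> lx x0; rewrite /w detV (vinv hv) // detnz. Qed.

Lemma invnz {x} : lam x -> x != 0 -> x^-1 != 0.
Proof. by move=> lx x0; rewrite invr_eq0. Qed.

Lemma Xnz {x} n : lam x -> x != 0 -> x ^+ n != 0.
Proof.
move=> lx x0; elim: n => [|n IH]; first by rewrite expr0 oner_eq0.
by rewrite exprS (mulnz lx (lamX n lx) x0 IH).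
Qed.

Lemma wX {x} n : lam x -> x != 0 -> w (x ^+ n) = w x *+ n.
Proof.
move=> lx x0; elim: n => [|n IH]; first by rewrite expr0 w1.
by rewrite exprS (wM lx (lamX n lx) x0 (Xnz n lx x0)) IH mulrS.
Qed.

Lemma zz (V : zmodType) (A B C D : V) : A - B - (C - D) = A - (C + B) + D.
Proof. rewrite opprB opprD -!addrA; congr (_ + _). by rewrite addrCA [D - C]addrC. Qed.

Lemma trace_int {t} : lam t -> wge 0 t -> ge v 0 (\tr t).
Proof.
move=> lt ht.
case: (classic (exists c, t = c%:M)) => [[c ect]|nsc].
  subst t; rewrite mxtrace_scalar mulr2n.
  have [->|c0] := eqVneq c 0; first by rewrite addr0; left.
  case: ht => [e|h].
    by exfalso; move: e => /matrixP /(_ 0 0); rewrite !mxE /= mulr1n; apply/eqP.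
  rewrite wC // in h; apply: (ge_add hv); right; lia.
have t0 : t != 0.
  apply/eqP => e; apply: nsc; exists 0; by rewrite e -scalemx1 scale0r.
have [a0|a0] := eqVneq (\tr t) 0; first by left.
case: (boolP (0 <= v (\tr t))) => va; first by right.
have gb : ge v 0 (\det t) by case: ht => [/eqP|h]; [rewrite (negPf t0) | right].
have vneg : v (\tr t) < 0 by lia.
have [y hy] := hensel hv hc a0 vneg gb.
pose z := \tr t - y.
have ez : (t - y *: 1) * (t - z *: 1) = 0.
  rewrite mulrBl !mulrBr -!scalerAl -!scalerAr !mul1r !mulr1 scalerA.
  have yz : y * z = \det t := hy.
  have htr : \tr t *: t = y *: t + z *: t by rewrite -scalerDl /z addrC subrK.
  rewrite yz zz -htr; have := @CH2 _ t; by rewrite -scalemx1.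
have f1 : t - y *: 1 != 0.
  by rewrite subr_eq0; apply/eqP => e; apply: nsc; exists y; rewrite e scalemx1.
have f2 : t - z *: 1 != 0.
  by rewrite subr_eq0; apply/eqP => e; apply: nsc; exists z; rewrite e scalemx1.
have := mulnz (lamB lt (lamZ y lam1)) (lamB lt (lamZ z lam1)) f1 f2.
by rewrite ez eqxx.
Qed.

Lemma wge0 n : wge n 0. Proof. by left. Qed.

Lemma wge_le {m n x} : m <= n -> wge n x -> wge m x.
Proof. by move=> mn [->|h]; [left|right; exact: le_trans mn h]. Qed.

Lemma wge_opp {n x} : wge n x -> wge n (- x).
Proof. by move=> [->|h]; [left; rewrite oppr0|right; rewrite wN]. Qed.

Lemma wge_mul {m n x y} : lam x -> lam y -> wge m x -> wge n y -> wge (m + n) (x * y).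
Proof.
move=> lx ly [->|hx]; first by rewrite mul0r; left.
move=> [->|hy]; first by rewrite mulr0; left.
have [->|x0] := eqVneq x 0; first by rewrite mul0r; left.
have [->|y0] := eqVneq y 0; first by rewrite mulr0; left.
by right; rewrite wM // lerD.
Qed.

Lemma unitP {x} : lam x -> x != 0 -> x \is a GRing.unit.
Proof. exact: lamU. Qed.

Lemma wultra {n x y} : lam x -> lam y -> wge n x -> wge n y -> wge n (x + y).
Proof.
have key : forall x y, lam x -> lam y -> x != 0 -> y != 0 -> x + y != 0 ->
    w x <= w y -> w x <= w (x + y).
  move=> {x y} x y lx ly x0 y0 xy0 wxy.
  pose t := x^-1 * y.
  have lt : lam t by apply: lamM => //; apply: lamV.
  have t0 : t != 0 by apply: mulnz => //; [apply: lamV | apply: invnz].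
  have wt : w t = w y - w x by rewrite /t (wM (lamV lx) ly (invnz lx x0) y0) (wV lx x0) addrC.
  have ex : x + y = x * (1 + t) by rewrite mulrDr mulr1 /t mulVKr // unitP.
  have ut : 1 + t != 0 by apply: contraNneq xy0; rewrite ex => ->; rewrite mulr0.
  have l1t : lam (1 + t) by apply: lamD lam1 lt.
  rewrite ex wM // [w (1 + t)]/w det1D.
  have g : ge v 0 (1 + \tr t + \det t).
    apply: (ge_add hv); first apply: (ge_add hv).
    - by right; rewrite (v1 hv).
    - by apply: (trace_int lt); right; rewrite wt subr_ge0.
    - by right; rewrite -/(w t) wt subr_ge0.
  case: g => [e|h]; last by rewrite lerDl.
  by exfalso; move: (detnz l1t ut); rewrite det1D e eqxx.
move=> lx ly [->|hx]; first by rewrite add0r.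
move=> [->|hy]; first by rewrite addr0; right.
have [->|xy0] := eqVneq (x + y) 0; first by left.
have [->|x0] := eqVneq x 0; first by rewrite add0r; right.
have [->|y0] := eqVneq y 0; first by rewrite addr0; right.
right; case: (lerP (w x) (w y)) => h.
  by apply: le_trans (key x y lx ly x0 y0 xy0 h).
rewrite addrC; apply: le_trans hy (key y x ly lx y0 x0 _ (ltW h)).
by rewrite addrC.
Qed.

Lemma wge_sum n (I : Type) (r : seq I) (P : pred I) (F : I -> 'M[K]_2) :
  (forall i, P i -> lam (F i) /\ wge n (F i)) ->
  lam (\sum_(i <- r | P i) F i) /\ wge n (\sum_(i <- r | P i) F i).
Proof.
move=> h; apply: (big_ind (fun z => lam z /\ wge n z)) => //.
- by split; [apply: lam0 | left].
- by move=> a b [la ga] [lb gb]; split; [apply: lamD | apply: wultra].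
Qed.

Lemma wCge {c} : ge v 0 c -> wge 0 c%:M.
Proof.
move=> [->|h]; first by left; rewrite -scalemx1 scale0r.
have [->|c0] := eqVneq c 0; first by left; rewrite -scalemx1 scale0r.
by right; rewrite wC //; lia.
Qed.

Lemma intcl x : int_closure v lam x <-> lam x /\ wge 0 x.
Proof.
split.
  move=> [lx [p [mp cp hp]]]; split => //.
  have [->|x0] := eqVneq x 0; first by left.
  case: (boolP (0 <= w x)) => hwx; first by right.
  exfalso.
  pose z := x^-1.
  have lz : lam z by apply: lamV.
  have z0 : z != 0 by apply: invnz.
  have wz : w z = - w x by apply: wV.
  have hs : size p = (size p).-1.+1.
    by rewrite prednK // size_poly_gt0 monic_neq0.
  move: hp; rewrite horner_mx_sum hs big_ord_recr /=.
  have pn : p`_(size p).-1 = 1 by move/monicP: mp.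
  rewrite pn scale1r; set n := (size p).-1; set S := \sum_(i < n) _ => hS.
  have zx : z * x = 1 by rewrite /z mulVr // unitP.
  have xz : x * z = 1 by rewrite /z mulrV // unitP.
  have czx : GRing.comm z x by rewrite /GRing.comm zx xz.
  have zxi : forall i, z ^+ i * x ^+ i = 1 by move=> i; rewrite -exprMn_comm // zx expr1n.
  have e1 : z ^+ n * S = -1.
    have -> : S = - x ^+ n by apply/eqP; rewrite -addr_eq0 hS.
    by rewrite mulrN zxi.
  have e2 : z ^+ n * S = \sum_(i < n) p`_i *: z ^+ (n - i).
    rewrite /S mulr_sumr; apply: eq_bigr => i _.
    rewrite -scalerAr; congr (_ *: _).
    rewrite -{1}(subnK (ltnW (ltn_ord i))) exprD -mulrA zxi mulr1 //.
  have g : lam (z ^+ n * S) /\ wge 1 (z ^+ n * S).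
    rewrite e2; apply: wge_sum => i _.
    have lt : lam (p`_i *: z ^+ (n - i)) by apply: lamZ; apply: lamX.
    split => //.
    rewrite (_ : p`_i *: z ^+ (n - i) = (p`_i)%:M * z ^+ (n - i)); last first.
      by rewrite -scalemx1 (_ : 1%:M = 1) // -scalerAl mul1r.
    rewrite -[1]add0r; apply: wge_mul; [apply: lamC | apply: lamX | apply: wCge; apply: cp|] => //.
    right; rewrite wX // wz.
    have : (0 < n - i)%N by rewrite subn_gt0.
    case: (n - i)%N => // k _; rewrite mulrS; lia.
  case: g => _; rewrite e1 => /wge_opp; rewrite opprK => -[/eqP|]; first by rewrite oner_eq0.
  by rewrite w1.
move=> [lx hx]; split => //; exists (char_poly x); split.
- exact: char_poly_monic.
- move=> [|[|[|i]]].
  + rewrite char_poly_det; apply: (@ge_le _ _ 0 (0 + 0)) => //; apply: (ge_mul hv).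
      by rewrite sqrrN expr1n; right; rewrite (v1 hv).
    case: hx => [->|h]; first by rewrite det0; left.
    by right.
  + rewrite (char_poly_trace x) //; apply: (ge_opp hv); exact: (trace_int lx).
  + have := char_poly_monic x; rewrite monicE /lead_coef size_char_poly /= => /eqP ->.
    by right; rewrite (v1 hv).
  + by left; rewrite nth_default // size_char_poly.
- exact: Cayley_Hamilton.
Qed.

Definition Ol x := lam x /\ wge 0 x.

Lemma Ol_mul {x y} : Ol x -> Ol y -> Ol (x * y).
Proof. by move=> [lx gx] [ly gy]; split; [apply: lamM | apply: (wge_mul (m:=0) (n:=0))]. Qed.
Lemma Ol_add {x y} : Ol x -> Ol y -> Ol (x + y).
Proof. by move=> [lx gx] [ly gy]; split; [apply: lamD | apply: wultra]. Qed.
Lemma Ol_opp {x} : Ol x -> Ol (- x).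
Proof. by move=> [lx gx]; split; [apply: lamN | apply: wge_opp]. Qed.
Lemma Ol_sub {x y} : Ol x -> Ol y -> Ol (x - y).
Proof. by move=> hx hy; apply: Ol_add hx (Ol_opp hy). Qed.
Lemma Ol1 : Ol 1. Proof. by split; [apply: lam1 | right; rewrite w1]. Qed.
Lemma Ol0 : Ol 0. Proof. by split; [apply: lam0 | left]. Qed.
Lemma OlX {x} n : Ol x -> Ol (x ^+ n).
Proof. by move=> h; elim: n => [|n IH]; [rewrite expr0; apply: Ol1 | rewrite exprS; apply: Ol_mul]. Qed.
Lemma Ol_int x : int_closure v lam x <-> Ol x. Proof. exact: intcl. Qed.

Lemma Ol_inv {e} : Ol e -> e != 0 -> w e = 0 -> Ol e^-1.
Proof. by move=> [le _] e0 we; split; [apply: lamV | right; rewrite wV // we oppr0]. Qed.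

Lemma onemx_neq0 : (1%:M : 'M[K]_2) != 0. Proof. exact: oner_neq0. Qed.

Lemma pi_facts (pi : 'M[K]_2) : uniformizer (int_closure v lam) pi ->
  [/\ Ol pi, pi != 0, 1 <= w pi &
      forall x, Ol x -> wge 1 x -> exists y, Ol y /\ x = pi * y].
Proof.
move=> [hpi [hid [hn1 hmax]]].
have Opi : Ol pi by apply/Ol_int.
have gpi : wge 1 pi.
  have [->|p0] := eqVneq pi 0; first by left.
  case: (Opi) => lp [/eqP|hp]; first by rewrite (negPf p0).
  case: (boolP (1 <= w pi)) => h; first by right.
  exfalso; apply: hn1.
  have wp0 : w pi = 0 by lia.
  exists pi^-1; first by apply/Ol_int; apply: Ol_inv Opi p0 wp0.
  by rewrite mulrV // unitP.
pose M x := int_closure v lam x /\ wge 1 x.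
have hM : is_ideal (int_closure v lam) M.
  split.
  - by move=> x [].
  - by split; [apply/Ol_int; apply: Ol0 | left].
  - move=> x y [/Ol_int hx gx] [/Ol_int hy gy]; split; first by apply/Ol_int; apply: Ol_sub.
    by apply: wultra; [case: hx | apply: lamN; case: hy | | apply: wge_opp].
  - move=> x y [/Ol_int hx gx] /Ol_int hy; split; split; try (apply/Ol_int; apply: Ol_mul => //).
      by rewrite -[1]add0r; apply: wge_mul => //; [case: hy | case: hx | case: hy].
    by rewrite -[1]addr0; apply: wge_mul => //; [case: hx | case: hy | case: hy].
have IM : forall x, (exists2 y, int_closure v lam y & x = pi * y) -> M x.
  move=> x [y /Ol_int hy ->]; split; first by apply/Ol_int; apply: Ol_mul.
  by rewrite -[1]addr0; apply: wge_mul => //; [case: Opi | case: hy | case: hy].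
have eqM : forall x, M x <-> (exists2 y, int_closure v lam y & x = pi * y).
  case: (hmax M hM IM) => [//|[_ [e|]]]; first by move: onemx_neq0; rewrite e eqxx.
  by rewrite w1.
have key : forall x, Ol x -> wge 1 x -> exists y, Ol y /\ x = pi * y.
  move=> x hx gx; have [y /Ol_int hy ->] : exists2 y, int_closure v lam y & x = pi * y.
    by apply/eqM; split => //; apply/Ol_int.
  by exists y.
have [c [c0 vc]] : exists c : K, c != 0 /\ v c = 1.
  by case: hv => _ _ [c [c0 vc]]; exists c.
have gc : ge v 0 c by right; rewrite vc.
have Oc : Ol c%:M := conj (lamC c) (wCge gc).
have gc1 : wge 1 c%:M by right; rewrite wC // vc.
have cM0 : c%:M != 0 :> 'M[K]_2.
  by apply/eqP => /matrixP /(_ 0 0); rewrite !mxE /= mulr1n; apply/eqP.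
have [y [_ ey]] := key _ Oc gc1.
have p0 : pi != 0 by apply/eqP => e; move: cM0; rewrite ey e mul0r eqxx.
split => //.
by case: gpi => [/eqP|]; first rewrite (negPf p0).
Qed.

Arguments pi_facts [pi].
Lemma Olw {x} : Ol x -> x != 0 -> 0 <= w x.
Proof. by move=> [_ [e|h]] x0 //; move: x0; rewrite e eqxx. Qed.

Lemma factor (pi : 'M[K]_2) : uniformizer (int_closure v lam) pi ->
  forall x, Ol x -> x != 0 ->
  exists r e, [/\ x = pi ^+ r * e, Ol e, e != 0 & w e = 0].
Proof.
move=> hu; have [Opi p0 wp key] := pi_facts hu.
suff H : forall k : nat, forall x, Ol x -> x != 0 -> w x <= k%:Z ->
    exists r e, [/\ x = pi ^+ r * e, Ol e, e != 0 & w e = 0].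
  move=> x hx x0; apply: (H (absz (w x))) => //; have := Olw hx x0; lia.
elim=> [|k IH] x hx x0 hk; have gx := Olw hx x0.
  by exists 0%N, x; rewrite expr0 mul1r; split => //; lia.
case: (boolP (w x == 0)) => [/eqP e|ne].
  by exists 0%N, x; rewrite expr0 mul1r.
have g1 : wge 1 x by right; have := negP ne; lia.
have [y [Oy ey]] := key x hx g1.
have y0 : y != 0 by apply: contraNneq x0; rewrite ey => ->; rewrite mulr0.
have wy : w y = w x - w pi.
  rewrite ey wM //; [lia | by case: Opi | by case: Oy].
have hk' : w y <= k%:Z by lia.
have [r [e [er Oe e0 we]]] := IH y Oy y0 hk'.
by exists r.+1, e; rewrite ey er exprS mulrA.
Qed.

Arguments factor [pi].

Lemma not_all_lam : ~ (forall x, lam x).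
Proof.
move=> h; have := lam_comm (h (delta_mx 0 1)) (h (delta_mx 1 0)).
rewrite -[_ * _]/(_ *m _) -[X in _ = X]/(_ *m _) !mul_delta_mx => /matrixP /(_ 0 0).
rewrite !mxE /= => /eqP; by rewrite oner_eq0.
Qed.

Lemma exists_u : exists u, ~ lam u.
Proof. by apply: NNPP => h; apply: not_all_lam => x; apply: NNPP => hx; apply: h; exists x. Qed.

Lemma indep {u} : ~ lam u -> forall {m l}, lam m -> lam l -> m + l * u = 0 -> l = 0 /\ m = 0.
Proof.
move=> nu m l lm ll e.
have [l0|l0] := eqVneq l 0; first by move: e; rewrite l0 mul0r addr0.
exfalso; apply: nu.
have : l * u = - m by apply/eqP; rewrite -addr_eq0 addrC e.
move=> /(congr1 (fun z => l^-1 * z)); rewrite mulKr ?unitP // => ->.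
by apply: lamM; [apply: lamV | apply: lamN].
Qed.

Lemma uniq_dec {u} : ~ lam u -> forall {m l m' l'}, lam m -> lam l -> lam m' -> lam l' ->
  m + l * u = m' + l' * u -> m = m' /\ l = l'.
Proof.
move=> nu m l m' l' lm ll lm' ll' e.
have z : (m - m') + (l - l') * u = 0 by rewrite mulrBl addrACA -opprD e subrr.
have [/eqP h1 /eqP h2] := indep nu (lamB lm lm') (lamB ll ll') z.
by move: h1 h2; rewrite !subr_eq0 => /eqP -> /eqP ->.
Qed.

Lemma decomp {u} : ~ lam u -> forall x, exists m l, [/\ lam m, lam l & x = m + l * u].
Proof.
move=> nu x.
case: hq => _ [_ _ _ _ [e1 [e2 [l1 l2 ind sp]]]].
pose X : 4.-tuple 'M[K]_2 := [tuple e1; e2; e1 * u; e2 * u].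
have regroup : forall k : 'I_4 -> K,
   \sum_(i < 4) k i *: X`_i = 
   (k ord0 *: e1 + k (lift ord0 ord0) *: e2) + 
   (k (lift ord0 (lift ord0 ord0)) *: e1 + k (lift ord0 (lift ord0 (lift ord0 ord0))) *: e2) * u.
  move=> k; rewrite !big_ord_recl big_ord0 /=.
  by rewrite addr0 mulrDl -!scalerAl !addrA.
have lin : forall a b : K, lam (a *: e1 + b *: e2) by move=> a b; apply: lamD; apply: lamZ.
have hfree : free X.
  apply/freeP => k; rewrite regroup => hk.
  have [hl hm] := indep nu (lin _ _) (lin _ _) hk.
  have [k0 k1] := ind _ _ hm; have [k2 k3] := ind _ _ hl.
  by apply: ord4.
have hX : <<X>>%VS = fullv.
  apply/eqP; rewrite eqEdim subvf /= dimvf.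
  by move/eqP: hfree => ->.
have xX : x \in <<X>>%VS by rewrite hX memvf.
have := coord_span xX; rewrite regroup => ->.
do 2 eexists; split; [idtac | idtac | reflexivity]; apply: lin.
Qed.

Lemma principal (J : mxset K) C0 : (forall j, J j -> lam j) ->
  (exists j, J j /\ j != 0) -> (forall j, J j -> wge C0 j) ->
  exists j0, [/\ J j0, j0 != 0 & forall j, J j -> exists o, Ol o /\ j = o * j0].
Proof.
move=> hl [j1 [J1 j10]] hb.
have nexP : forall j, J j -> j != 0 -> ~ (exists j', [/\ J j', j' != 0 & w j' < w j]) ->
    exists j0, [/\ J j0, j0 != 0 & forall j, J j -> j != 0 -> w j0 <= w j].
  move=> j Jj j0 nex; exists j; split => // j' Jj' j'0.
  rewrite leNgt; apply/negP => lt; apply: nex; exists j'; by split.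
have wC0 : forall j, J j -> j != 0 -> C0 <= w j.
  by move=> j Jj j0; case: (hb j Jj) => [e|//]; move: j0; rewrite e eqxx.
have [j0 [Jj0 j00 hmin]] : exists j0, [/\ J j0, j0 != 0 & forall j, J j -> j != 0 -> w j0 <= w j].
  suff H : forall k : nat, forall j, J j -> j != 0 -> w j - C0 <= k%:Z ->
      exists j0, [/\ J j0, j0 != 0 & forall j, J j -> j != 0 -> w j0 <= w j].
    by apply: (H (absz (w j1 - C0)) j1) => //; lia.
  elim=> [|k IH] j Jj j0 hk.
    case: (classic (exists j', [/\ J j', j' != 0 & w j' < w j])) => [[j' [Jj' j'0 lt]]|nex].
      by have := wC0 j' Jj' j'0; lia.
    exact: nexP nex.
  case: (classic (exists j', [/\ J j', j' != 0 & w j' < w j])) => [[j' [Jj' j'0 lt]]|nex].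
    by apply: (IH j' Jj' j'0); lia.
  exact: nexP nex.
exists j0; split => // j Jj.
have [->|jn0] := eqVneq j 0; first by exists 0; rewrite mul0r; split => //; apply: Ol0.
exists (j * j0^-1); split; last by rewrite mulrVK //; apply: unitP => //; apply: hl.
split; first by apply: lamM; [apply: hl | apply: lamV; apply: hl].
right; rewrite wM ?wV //; [have := hmin j Jj jn0; lia | | | |].
all: by [apply: hl | apply: lamV; apply: hl | apply: invnz => //; apply: hl].
Qed.

Section Ord.
Variable u : 'M[K]_2.
Hypothesis nu : ~ lam u.

Definition JC (C : mxset K) l := lam l /\ exists m, lam m /\ C (m + l * u).

Variable C : mxset K.
Hypothesis hC : is_order v C.
Hypothesis OlC : forall x, Ol x -> C x.

Lemma C_add {x y} : C x -> C y -> C (x + y). Proof. by case: hC => _ h _ _ cx cy; case: (h x y cx cy). Qed.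
Lemma C_mul {x y} : C x -> C y -> C (x * y). Proof. by case: hC => _ h _ _ cx cy; case: (h x y cx cy) => _ []. Qed.
Lemma C_opp {x} : C x -> C (- x). Proof. by case: hC => _ h _ _ cx; case: (h x x cx cx) => _ []. Qed.
Lemma C_sub {x y} : C x -> C y -> C (x - y). Proof. by move=> cx cy; apply: C_add cx (C_opp cy). Qed.
Lemma C_scale {a x} : ge v 0 a -> C x -> C (a *: x). Proof. by case: hC => _ _ h _; apply: h. Qed.
Lemma C_X {x} n : C x -> C (x ^+ n).
Proof. by move=> h; elim: n => [|n IH]; [rewrite expr0; apply: OlC; apply: Ol1 | rewrite exprS; apply: C_mul]. Qed.

Lemma JC_add {l1 l2} : JC C l1 -> JC C l2 -> JC C (l1 + l2).
Proof.
move=> [ll1 [m1 [lm1 c1]]] [ll2 [m2 [lm2 c2]]]; split; first exact: lamD.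
exists (m1 + m2); split; first exact: lamD.
by rewrite mulrDl addrACA; apply: C_add.
Qed.

Lemma JC_mul {o l} : Ol o -> JC C l -> JC C (o * l).
Proof.
move=> Oo [ll [m [lm cm]]]; have [lo _] := Oo; split; first exact: lamM.
exists (o * m); split; first exact: lamM.
by rewrite -mulrA -mulrDr; apply: C_mul => //; apply: OlC.
Qed.

Definition Qb n x := forall m l, lam m -> lam l -> x = m + l * u -> wge n m /\ wge n l.

Lemma Qb_le {m n x} : m <= n -> Qb n x -> Qb m x.
Proof. by move=> mn h a b la lb e; case: (h a b la lb e) => h1 h2; split; apply: wge_le mn _. Qed.

Lemma Qb_add {n x y} : Qb n x -> Qb n y -> Qb n (x + y).
Proof.
move=> hx hy m l lm ll e.
have [m1 [l1 [lm1 ll1 e1]]] := decomp nu x.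
have [m2 [l2 [lm2 ll2 e2]]] := decomp nu y.
have [g1 g2] := hx _ _ lm1 ll1 e1; have [g3 g4] := hy _ _ lm2 ll2 e2.
have e3 : (m1 + m2) + (l1 + l2) * u = m + l * u by rewrite -e mulrDl addrACA -e1 -e2.
have [<- <-] := uniq_dec nu (lamD lm1 lm2) (lamD ll1 ll2) lm ll e3.
by split; apply: wultra.
Qed.

Lemma Qb_scale {n a x} : ge v 0 a -> Qb n x -> Qb n (a *: x).
Proof.
move=> ga hx m l lm ll e.
have [m1 [l1 [lm1 ll1 e1]]] := decomp nu x.
have [g1 g2] := hx _ _ lm1 ll1 e1.
have e3 : (a%:M * m1) + (a%:M * l1) * u = m + l * u.
  have sm : forall y, a%:M * y = a *: y.
    by move=> y; exact: mul_scalar_mx.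
  by rewrite -e e1 !sm scalerDr -scalerAl.
have [<- <-] := uniq_dec nu (lamM (lamC a) lm1) (lamM (lamC a) ll1) lm ll e3.
by split; rewrite -[n]add0r; apply: wge_mul => //; try apply: lamC; apply: wCge.
Qed.

Lemma Qb0 n : Qb n 0.
Proof.
move=> m l lm ll e; have [-> ->] := indep nu lm ll (esym e).
by split; left.
Qed.

Lemma bound_gen g : exists n, Qb n g.
Proof.
have [m [l [lm ll e]]] := decomp nu g.
exists (Num.min (w m) (w l)) => m' l' lm' ll' e'.
have [<- <-] := uniq_dec nu lm ll lm' ll' (etrans (esym e) e').
by split; right; rewrite ge_min lexx ?orbT.
Qed.

Lemma bound_list (s : seq 'M[K]_2) : exists n, forall g, g \in s -> Qb n g.
Proof.
elim: s => [|g s [n IH]]; first by exists 0.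
have [n' hg] := bound_gen g.
exists (Num.min n n') => x; rewrite inE => /orP [/eqP ->|xs].
  by apply: Qb_le hg; rewrite ge_min lexx orbT.
by apply: Qb_le (IH x xs); rewrite ge_min lexx.
Qed.

Lemma boundC : exists n, forall x, C x -> Qb n x.
Proof.
case: hC => _ _ _ [s [gs hs]].
have [n hn] := bound_list s.
exists n => x /hs [c [gc ->]].
apply: (big_ind (Qb n)); [exact: Qb0 | by move=> ? ? ; apply: Qb_add |].
move=> i _; apply: Qb_scale; [exact: gc | apply: hn; exact: mem_nth].
Qed.

Lemma C_lam_Ol x : C x -> lam x -> Ol x.
Proof.
move=> cx lx; split => //.
have [->|x0] := eqVneq x 0; first by left.
case: (boolP (0 <= w x)) => h; first by right.
exfalso; have [n hn] := boundC.
pose k := (absz n).+1.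
have ek : x ^+ k = x ^+ k + 0 * u by rewrite mul0r addr0.
have [g _] := hn _ (C_X k cx) (x ^+ k) 0 (lamX k lx) lam0 ek.
case: g => [e|g]; first by move: (Xnz k lx x0); rewrite e eqxx.
move: g; rewrite wX // -mulr_natr /k.
have : w x <= -1 by lia.
move: (w x) => z hz; rewrite natz; nia.
Qed.

End Ord.

Lemma lam_sum (I : Type) (r : seq I) (P : pred I) (F : I -> 'M[K]_2) :
  (forall i, P i -> lam (F i)) -> lam (\sum_(i <- r | P i) F i).
Proof. by move=> h; apply: big_ind => //; [apply: lam0 | move=> ? ?; apply: lamD]. Qed.

Lemma main_sec (pi : 'M[K]_2) (B B' : mxset K) :
  uniformizer (int_closure v lam) pi ->
  is_full_order v B -> (forall x, int_closure v lam x -> B x) ->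
  is_full_order v B' -> (forall x, B' x -> B x) -> (forall x, int_closure v lam x -> B' x) ->
  exists r : nat, forall x, B' x <->
      exists o b, [/\ int_closure v lam o, B b & x = o + pi ^+ r * b].
Proof.
move=> hu [hBo hBf] hOB [hB'o hB'f] hB'B hOB'.
have [u nu] := exists_u.
have OlB : forall x, Ol x -> B x by move=> x /Ol_int; apply: hOB.
have OlB' : forall x, Ol x -> B' x by move=> x /Ol_int; apply: hOB'.
have Badd : forall x y, B x -> B y -> B (x + y).
  by case: hBo => _ h _ _ x y bx bz; case: (h x y bx bz).
have Bmul : forall x y, B x -> B y -> B (x * y).
  by case: hBo => _ h _ _ x y bx bz; case: (h x y bx bz) => _ [].
have Bopp : forall x, B x -> B (- x).
  by case: hBo => _ h _ _ x bx; case: (h x x bx bx) => _ [].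
have B'add : forall x y, B' x -> B' y -> B' (x + y).
  by case: hB'o => _ h _ _ x y bx bz; case: (h x y bx bz).
have [Opi p0 wpi _] := pi_facts hu.
pose JB := JC u B; pose JB' := JC u B'.
have JB'B : forall l, JB' l -> JB l.
  by move=> l [ll [m [lm bm]]]; split => //; exists m; split => //; apply: (hB'B).
have JB'nz : exists l, JB' l /\ l != 0.
  apply: NNPP => nex; apply: not_all_lam => x.
  have inl : forall y, B' y -> lam y.
    move=> y By; have [m [l [lm ll ey]]] := decomp nu y.
    have l0 : l = 0.
      apply: NNPP => ln0; apply: nex; exists l; split; last by apply/eqP.
      by split => //; exists m; split => //; rewrite -ey.
    by rewrite ey l0 mul0r addr0.
  have [s [gs [c ->]]] := hB'f x.
  by apply: lam_sum => i _; apply: lamZ; apply: inl; apply: gs; apply: mem_nth.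
have [n hn] := @boundC u nu B hBo.
have bJB : forall l, JB l -> wge n l.
  by move=> l [ll [m [lm bm]]]; have [] := hn _ bm m l lm ll erefl.
have JBnz : exists l, JB l /\ l != 0.
  by case: JB'nz => l [/JB'B h1 h2]; exists l.
have [j0 [Jj0 j00 hj0]] := @principal JB n (fun l h => h.1) JBnz bJB.
have [j1 [Jj1 j10 hj1]] := @principal JB' n (fun l h => h.1) JB'nz
   (fun l h => bJB l (JB'B l h)).
have [o [Oo ej1]] := hj0 j1 (JB'B _ Jj1).
have o0 : o != 0 by apply: contraNneq j10; rewrite ej1 => ->; rewrite mul0r.
have [r [e [eo Oe e0 we]]] := factor hu o Oo o0.
have Oei := Ol_inv Oe e0 we.
pose P := pi ^+ r.
have lP : lam P by apply: lamX; case: Opi.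
have le : lam e by case: Oe.
have OP : Ol P by apply: OlX.
have JBeq : forall l, JB' l <-> exists j, JB j /\ l = P * j.
  move=> l; split.
    move=> Jl; have [o' [Oo' ->]] := hj1 l Jl.
    exists (o' * e * j0); split.
      exact: (@JC_mul u B hBo OlB (o' * e) j0 (Ol_mul Oo' Oe) Jj0).
    have lo' : lam o' by case: Oo'.
    by rewrite ej1 eo !mulrA (lam_comm lo' lP).
  move=> [j [Jj ->]]; have [o'' [Oo'' ej]] := hj0 j Jj.
  have lo'' : lam o'' by case: Oo''.
  have := @JC_mul u B' hB'o OlB' (o'' * e^-1) j1 (Ol_mul Oo'' Oei) Jj1.
  suff -> : o'' * e^-1 * j1 = P * j by [].
  rewrite ej1 eo (lam_comm lP le) -!mulrA mulKr; last by apply: unitP.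
  by rewrite ej !mulrA (lam_comm lo'' lP).
have BP : B P by apply: (OlB).
have Blam : forall x, B x -> lam x -> Ol x := @C_lam_Ol u nu B hBo OlB.
have sub2 : forall a b c : 'M[K]_2, (a + c) - (b + c) = a - b.
  by move=> a b c; rewrite opprD addrACA subrr addr0.
exists r => x; split.
  move=> B'x; have Bx := hB'B x B'x.
  have [m [l [lm ll ex]]] := decomp nu x.
  have Jl : JB' l by split => //; exists m; split => //; rewrite -ex.
  have [j [[lj [m0 [lm0 Bb]]] el]] := (JBeq l).1 Jl.
  exists (x - P * (m0 + j * u)), (m0 + j * u); split => //; last by rewrite subrK.
  apply/Ol_int; apply: (Blam).
    by apply: (Badd) => //; apply: (Bopp); apply: (Bmul).
  by rewrite ex el mulrDr -mulrA sub2; apply: lamB => //; apply: lamM.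
move=> [o' [b [/Ol_int Oo' Bb ->]]].
have [m [j [lm lj eb]]] := decomp nu b.
have Jj : JB j by split => //; exists m; split => //; rewrite -eb.
have [_ [m' [lm' B'y]]] := (JBeq (P * j)).2 (ex_intro _ j (conj Jj erefl)).
have ez : o' + P * b = ((o' + P * m) - m') + (m' + P * j * u).
  by rewrite addrA subrK eb mulrDr mulrA addrA.
rewrite ez; apply: (B'add) => //; apply: (OlB'); apply: (Blam).
  rewrite -(addrK (m' + P * j * u) (o' + P * m - m')) -ez.
  apply: (Badd); first by apply: (Badd); [apply: (OlB) | apply: (Bmul)].
  by apply: (Bopp); apply: (hB'B).
apply: lamB => //; apply: lamD; [by case: Oo' | exact: lamM].
Qed.

End Lam.

Theorem lemma5p1 (K : fieldType) (v : K -> int) (lam : 'M[K]_2 -> Prop)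
    (pi : 'M[K]_2) (B : 'M[K]_2 -> Prop) :
  nonarch_local_field v ->
  quadratic_subfield lam ->
  uniformizer (int_closure v lam) pi ->
  is_full_order v B ->
  (forall x, int_closure v lam x -> B x) ->
  forall B' : 'M[K]_2 -> Prop,
    is_full_order v B' ->
    (forall x, B' x -> B x) ->
    (forall x, int_closure v lam x -> B' x) ->
    exists r : nat, forall x, B' x <->
      exists o b, [/\ int_closure v lam o, B b & x = o + pi ^+ r * b].
Proof.
move=> [hv hc _] hq hu hB hOB B' hB' hB'B hOB'.
exact: (@main_sec K v lam hv hc hq pi B B' hu hB hOB hB' hB'B hOB').
Qed.
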